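(* Let $f:\{0,1\}^N\to\{0,1\}$ be a non-constant total function. Then there is a promise $P\subseteq\{0,1\}^N$ such that \[\R(f|_P)=1,\qquad \R_0(f|_P)\ge\frac{\R_0(f)^{1/3}}{6}.\]
   Context: $f|_P$ is the restriction of $f$ to $P$ (a partial function). $\R$ is bounded-error (error at most $1/3$) randomized query complexity and $\R_0$ zero-error randomized query complexity (maximum over inputs in the domain of the expected number of queries); algorithms need only be correct on the domain. *)

(* Defs.v *)
From HB Require Import structures.
From mathcomp Require Import all_boot all_order all_algebra.
From mathcomp Require Import boolp classical_sets reals exp Rstruct.
Set Implicit Arguments. Unset Strict Implicit. Unset Printing Implicit Defensive.
Import Order.TTheory GRing.Theory Num.Theory.
Local Open Scope ring_scope.
Notation R := Rdefinitions.R.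

Definition input (N : nat) := {ffun 'I_N -> bool}.

Inductive dtree (N : nat) : Type :=
| Leaf of bool
| Node of 'I_N & dtree N & dtree N.  (* Node i t0 t1 : query x_i, go to t0 if 0, t1 if 1 *)
Arguments Leaf {N}.

Fixpoint dt_eval N (t : dtree N) (x : input N) : bool :=
  match t with
  | Leaf b => b
  | Node i t0 t1 => if x i then dt_eval t1 x else dt_eval t0 x
  end.

Fixpoint dt_cost N (t : dtree N) (x : input N) : nat :=
  match t with
  | Leaf _ => 0
  | Node i t0 t1 => (if x i then dt_cost t1 x else dt_cost t0 x).+1
  end.

(* A randomized decision tree: a finitely supported probability distribution
   over deterministic decision trees, given as a list of (weight, tree). *)
Definition rdtree (N : nat) := seq (R * dtree N).

Definition is_distr N (A : rdtree N) : Prop :=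
  (forall p, List.In p A -> 0 <= p.1) /\ \sum_(p <- A) p.1 = 1.

Definition prob_out N (A : rdtree N) (x : input N) (b : bool) : R :=
  \sum_(p <- A) p.1 * ((dt_eval p.2 x == b) : nat)%:R.

Definition exp_cost N (A : rdtree N) (x : input N) : R :=
  \sum_(p <- A) p.1 * (dt_cost p.2 x)%:R.

Definition worst_cost N (P : {set input N}) (A : rdtree N) : nat :=
  \big[maxn/0%N]_(p <- A | 0 < p.1) \big[maxn/0%N]_(x in P) dt_cost p.2 x.

Definition worst_exp_cost N (P : {set input N}) (A : rdtree N) : R :=
  \big[Num.max/0]_(x in P) exp_cost A x.

Definition bounded_error N (f : input N -> bool) (P : {set input N}) (A : rdtree N) :=
  forall x, x \in P -> prob_out A x (f x) >= 2 / 3.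

Definition zero_error N (f : input N -> bool) (P : {set input N}) (A : rdtree N) :=
  forall x, x \in P -> prob_out A x (f x) = 1.

Definition Rq N (f : input N -> bool) (P : {set input N}) : R :=
  inf [set r : R | exists A : rdtree N,
         [/\ is_distr A, bounded_error f P A & r = (worst_cost P A)%:R]].

Definition R0q N (f : input N -> bool) (P : {set input N}) : R :=
  inf [set r : R | exists A : rdtree N,
         [/\ is_distr A, zero_error f P A & r = worst_exp_cost P A]].

(* Main.v *)
Require Import Defs.
From HB Require Import structures.
From mathcomp Require Import all_boot all_order all_algebra zify lra.
From mathcomp Require boolp classical_sets reals exp.
From mathcomp Require Import Rstruct.
Import Order.TTheory GRing.Theory Num.Theory.
Set Implicit Arguments. Unset Strict Implicit. Unset Printing Implicit Defensive.
Definition flip N (x : input N) (A : {set 'I_N}) : input N :=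
  [ffun p => x p (+) (p \in A)].
Definition pdisj N (F : {set {set 'I_N}}) :=
  [forall B in F, forall B' in F, (B != B') ==> [disjoint B & B']].
Definition cup N (F : {set {set 'I_N}}) : {set 'I_N} :=
  [set p | [exists B in F, p \in B]].
Definition sens N (f : input N -> bool) x B := f (flip x B) != f x.
Definition blockfam N (f : input N -> bool) x F := pdisj F && [forall B in F, sens f x B].
Definition bsx N (f : input N -> bool) x := (\max_(F | blockfam f x F) #|F|)%N.
Definition bsf N (f : input N -> bool) := (\max_(x : input N) bsx f x)%N.

Lemma flipE N (x : input N) A p : flip x A p = x p (+) (p \in A).
Proof. by rewrite ffunE. Qed.

Lemma flip0 N (x : input N) : flip x set0 = x.
Proof. by apply/ffunP=> p; rewrite flipE in_set0 addbF. Qed.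

Lemma flip_flip N (x : input N) (A B : {set 'I_N}) :
  flip (flip x A) B = flip x ((A :\: B) :|: (B :\: A)).
Proof.
apply/ffunP=> p; rewrite !flipE !inE.
by case: (p \in A); case: (p \in B); case: (x p).
Qed.

Lemma flip_flip_disj N (x : input N) (A B : {set 'I_N}) :
  [disjoint A & B] -> flip (flip x A) B = flip x (A :|: B).
Proof.
move=> dAB; apply/ffunP=> p; rewrite !flipE !inE.
case pA: (p \in A); last by case: (p \in B); case: (x p).
by rewrite (disjointFr dAB pA) /= addbF.
Qed.

Lemma flip_diff N (x y : input N) : flip x [set p | x p != y p] = y.
Proof. by apply/ffunP=> p; rewrite flipE inE; case: (x p); case: (y p). Qed.

Lemma sens_neq0 N (f : input N -> bool) x (B : {set 'I_N}) : sens f x B -> B != set0.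
Proof. by rewrite /sens; apply: contraNneq => ->; rewrite flip0. Qed.

Lemma blockfam_le N (f : input N -> bool) x F : blockfam f x F -> (#|F| <= bsf f)%N.
Proof.
move=> bF; apply: (leq_trans _ (leq_bigmax x)); rewrite /bsx.
by apply: (@leq_bigmax_cond _ (blockfam f x) (fun F : {set {set 'I_N}} => #|F|)).
Qed.

Lemma in_cup N (F : {set {set 'I_N}}) p : (p \in cup F) = [exists B in F, p \in B].
Proof. by rewrite inE. Qed.

Lemma disjP (T : finType) (A B : {set T}) :
  (forall x, x \in A -> x \in B -> False) -> [disjoint A & B].
Proof.
move=> H; rewrite disjoints_subset; apply/subsetP=> x xA; rewrite inE.
by apply/negP=> xB; exact: H xA xB.
Qed.

Lemma cupP N (F : {set {set 'I_N}}) p : reflect (exists2 B, B \in F & p \in B) (p \in cup F).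
Proof.
rewrite in_cup; apply: (iffP existsP) => [[B /andP[]]|[B BF pB]]; first by exists B.
by exists B; rewrite BF.
Qed.

Lemma cup_sub N (F : {set {set 'I_N}}) B : B \in F -> B \subset cup F.
Proof. by move=> BF; apply/subsetP=> p pB; apply/cupP; exists B. Qed.

Lemma addblock N (f : input N -> bool) x F (B : {set 'I_N}) :
  blockfam f x F -> sens f x B -> [disjoint B & cup F] ->
  blockfam f x (B |: F) /\ #|B |: F| = #|F|.+1.
Proof.
move=> /andP[dF sF] sB dBF.
have BnF : B \notin F.
  apply/negP=> BF; move: (sens_neq0 sB) => /set0Pn[p pB].
  by move: (disjointFr dBF pB); rewrite (subsetP (cup_sub BF)).
split; last by rewrite cardsU1 BnF.
apply/andP; split.
  apply/forallP=> C; apply/implyP; rewrite in_setU1 => /orP[/eqP->|CF];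
  apply/forallP=> C'; apply/implyP; rewrite in_setU1 => /orP[/eqP->|C'F];
  apply/implyP=> nC.
  - by rewrite eqxx in nC.
  - apply: disjP=> p pB pC'.
    by move: (disjointFr dBF pB); rewrite (subsetP (cup_sub C'F)).
  - apply: disjP=> p pC pB.
    by move: (disjointFr dBF pB); rewrite (subsetP (cup_sub CF)).
  - by move/forallP: dF => /(_ C); rewrite CF /= => /forallP/(_ C'); rewrite C'F nC.
apply/forallP=> C; apply/implyP; rewrite in_setU1 => /orP[/eqP->//|CF].
by move/forallP: sF => /(_ C); rewrite CF.
Qed.
Lemma pdisjU1 N (F : {set {set 'I_N}}) (B : {set 'I_N}) :
  pdisj F -> B != set0 -> [disjoint B & cup F] ->
  pdisj (B |: F) /\ #|B |: F| = #|F|.+1.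
Proof.
move=> dF nB dBF.
have BnF : B \notin F.
  apply/negP=> BF; move/set0Pn: nB => [p pB].
  by move: (disjointFr dBF pB); rewrite (subsetP (cup_sub BF)).
split; last by rewrite cardsU1 BnF.
apply/forallP=> C; apply/implyP; rewrite in_setU1 => /orP[/eqP->|CF];
apply/forallP=> C'; apply/implyP; rewrite in_setU1 => /orP[/eqP->|C'F];
apply/implyP=> nC.
- by rewrite eqxx in nC.
- apply: disjP=> p pB pC'.
  by move: (disjointFr dBF pB); rewrite (subsetP (cup_sub C'F)).
- apply: disjP=> p pC pB.
  by move: (disjointFr dBF pB); rewrite (subsetP (cup_sub CF)).
- by move/forallP: dF => /(_ C); rewrite CF /= => /forallP/(_ C'); rewrite C'F nC.
Qed.

Definition minsens N (f : input N -> bool) y (B : {set 'I_N}) :=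
  sens f y B && [forall B' : {set 'I_N}, (B' \proper B) ==> ~~ sens f y B'].

Lemma minblock_card N (f : input N -> bool) y B : minsens f y B -> (#|B| <= bsf f)%N.
Proof.
move=> /andP[sB /forallP mB].
pose F := [set [set p] | p in B].
have -> : #|B| = #|F| by rewrite card_imset //; exact: set1_inj.
apply: (@blockfam_le _ f (flip y B)); apply/andP; split.
  apply/forallP=> C; apply/implyP=> /imsetP[p pB ->].
  apply/forallP=> C'; apply/implyP=> /imsetP[q qB ->].
  apply/implyP=> npq; apply: disjP => r; rewrite !inE => /eqP-> /eqP pq.
  by rewrite pq eqxx in npq.
apply/forallP=> C; apply/implyP=> /imsetP[p pB ->].
rewrite /sens flip_flip.
have -> : (B :\: [set p]) :|: ([set p] :\: B) = B :\ p.
  apply/setP=> q; rewrite !inE; case: (q =P p) => [->|_]; by rewrite ?pB ?andbF ?orbF ?andbT.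
have := mB (B :\ p); rewrite properD1 //= /sens negbK => /eqP ->.
by rewrite eq_sym.
Qed.

Lemma exists_minsens N (f : input N -> bool) y (D : {set 'I_N}) :
  sens f y D -> exists2 B : {set 'I_N}, B \subset D & minsens f y B.
Proof.
move=> sD.
have PD : (D \subset D) && sens f y D by rewrite subxx.
case: (@arg_minnP _ D (fun B : {set 'I_N} => (B \subset D) && sens f y B) (fun B => #|B|) PD).
move=> B /andP[BD sB] minB; exists B => //; rewrite /minsens sB /=.
apply/forallP=> B'; apply/implyP=> pB'; apply/negP=> sB'.
have := minB B'; rewrite sB' (subset_trans (proper_sub pB') BD) => /(_ isT).
by rewrite leqNgt proper_card.
Qed.

Lemma cupU1 N (F : {set {set 'I_N}}) (B : {set 'I_N}) : cup (B |: F) = B :|: cup F.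
Proof.
apply/setP=> p; rewrite in_setU; apply/cupP/orP.
  by move=> [C]; rewrite in_setU1 => /orP[/eqP->|CF] pC; [left|right; apply/cupP; exists C].
by case=> [pB|/cupP[C CF pC]]; [exists B; rewrite ?setU11|exists C; rewrite ?setU1r].
Qed.

Lemma card_cup_le N (F : {set {set 'I_N}}) (m : nat) :
  (forall B, B \in F -> #|B| <= m)%N -> (#|cup F| <= #|F| * m)%N.
Proof.
move Hn : #|F| => n; elim: n F Hn => [|n IH] F Hn HF.
  move/eqP: Hn; rewrite cards_eq0 => /eqP->.
  by rewrite leqn0 cards_eq0; apply/eqP/setP=> p; rewrite in_set0; apply/negbTE/cupP=> -[C]; rewrite in_set0.
have : (0 < #|F|)%N by rewrite Hn.
rewrite card_gt0 => /set0Pn[B BF].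
have eF : F = B |: (F :\ B) by rewrite setD1K.
rewrite eF cupU1 mulSn; apply: (leq_trans (leq_card_setU _ _)); apply: leq_add; first exact: HF.
apply: IH; first by move: Hn; rewrite (cardsD1 B F) BF add1n => -[].
by move=> C; rewrite inE => /andP[_]; exact: HF.
Qed.

Definition is_cert N (f : input N -> bool) (y : input N) (S : {set 'I_N}) :=
  [forall y' : input N, [forall p in S, y' p == y p] ==> (f y' == f y)].

Lemma cert_exists N (f : input N -> bool) y :
  exists2 S, is_cert f y S & (#|S| <= bsf f * bsf f)%N.
Proof.
pose mfam (F : {set {set 'I_N}}) := pdisj F && [forall B in F, minsens f y B].
have m0 : mfam set0.
  by apply/andP; split; apply/forallP=> B; rewrite in_set0.
case: (@arg_maxnP _ set0 mfam (fun F => #|F|) m0) => F /andP[dF mF] maxF.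
have bF : blockfam f y F.
  apply/andP; split=> //; apply/forallP=> B; apply/implyP=> BF.
  by move/forallP: mF => /(_ B); rewrite BF => /andP[].
exists (cup F).
  apply/forallP=> y'; apply/implyP=> /forallP agr; case: (f y' =P f y) => // /eqP ne.
  pose D := [set p | y p != y' p].
  have sD : sens f y D by rewrite /sens /D flip_diff.
  case: (exists_minsens sD) => B BD mB.
  have dB : [disjoint B & cup F].
    apply: disjP=> p pB pF; have := agr p; rewrite pF /= => /eqP e.
    by move: (subsetP BD p pB); rewrite inE e eqxx.
  have [dBF cBF] := pdisjU1 dF (sens_neq0 (proj1 (andP mB))) dB.
  have : mfam (B |: F).
    apply/andP; split=> //; apply/forallP=> C; apply/implyP; rewrite in_setU1.
    by case/orP=> [/eqP->//|CF]; move/forallP: mF => /(_ C); rewrite CF.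
  by move/maxF; rewrite cBF => /(leq_ltn_trans)/(_ (ltnSn _)); rewrite ltnn.
have H : forall B, B \in F -> (#|B| <= bsf f)%N.
  by move=> B BF; apply: (@minblock_card _ f y); move/forallP: mF => /(_ B); rewrite BF.
apply: (leq_trans (card_cup_le H)).
by rewrite leq_mul2r (blockfam_le bF) orbT.
Qed.
Definition pa N := {ffun 'I_N -> option bool}.
Definition consistent N (y : input N) (r : pa N) :=
  [forall p, if r p is Some b then y p == b else true].
Definition upd N (r : pa N) p b : pa N := [ffun q => if q == p then Some b else r q].
Definition fill N (r : pa N) (s : seq 'I_N) (x : input N) :=
  foldl (fun r p => upd r p (x p)) r s.
Definition dom N (r : pa N) := [set p | r p != None].

Fixpoint qseq N (cont : pa N -> dtree N) (s : seq 'I_N) (r : pa N) : dtree N :=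
  match s with
  | [::] => cont r
  | p :: s' => Node p (qseq cont s' (upd r p false)) (qseq cont s' (upd r p true))
  end.

Lemma qseqE N (cont : pa N -> dtree N) s r x :
  dt_eval (qseq cont s r) x = dt_eval (cont (fill r s x)) x /\
  dt_cost (qseq cont s r) x = (size s + dt_cost (cont (fill r s x)) x)%N.
Proof.
elim: s r => [|p s IH] r //=.
by case: (x p) (IH (upd r p (x p))) => -[-> ->].
Qed.

Lemma fillE N (r : pa N) s x p :
  fill r s x p = if p \in s then Some (x p) else r p.
Proof.
elim: s r => [|q s IH] r //=; rewrite IH in_cons ffunE.
by case: (p \in s); case: (p =P q) => [->|]; rewrite ?orbT ?orbF.
Qed.

Lemma consistentP N (y : input N) (r : pa N) :
  reflect (forall p b, r p = Some b -> y p = b) (consistent y r).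
Proof.
apply: (iffP forallP) => [H p b e|H p]; first by move: (H p); rewrite e => /eqP.
by case e: (r p) => [b|] //; rewrite (H p b e).
Qed.

Lemma fill_consistent N (r : pa N) s x : consistent x r -> consistent x (fill r s x).
Proof.
move/consistentP=> H; apply/consistentP=> p b; rewrite fillE.
by case: (p \in s) => [[]|/H].
Qed.

Lemma consistent_fill N (r : pa N) s x z :
  consistent x r -> consistent z (fill r s x) -> consistent z r.
Proof.
move=> /consistentP Hx /consistentP Hz; apply/consistentP=> p b e.
have := Hz p; rewrite fillE; case: ifP => _.
  by move=> /(_ _ erefl) ->; apply: Hx.
by apply.
Qed.

Lemma dom_fill N (r : pa N) s x p : p \in dom r -> p \in dom (fill r s x).
Proof. by rewrite !inE fillE; case: ifP. Qed.

Lemma dom_fill_s N (r : pa N) s x p : p \in s -> p \in dom (fill r s x).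
Proof. by rewrite !inE fillE => ->. Qed.

Definition x0 N : input N := [ffun _ => false].
Definition constant N (f : input N -> bool) r :=
  [forall y : input N, forall y' : input N,
     (consistent y r && consistent y' r) ==> (f y == f y')].
Definition cval N (f : input N -> bool) r := f (odflt (x0 N) [pick y | consistent y r]).
Definition pick1 N (f : input N -> bool) r := odflt (x0 N) [pick y | consistent y r && f y].
Definition mincert N (f : input N -> bool) y := [arg min_(S < setT | is_cert f y S) #|S|].

Fixpoint build N (f : input N -> bool) n r : dtree N :=
  match n with
  | 0 => Leaf (cval f r)
  | n'.+1 => if constant f r then Leaf (cval f r)
             else qseq (build f n') (enum (mincert f (pick1 f r))) r
  end.

Definition Inv N (f : input N -> bool) n r :=
  forall z, consistent z r -> f z = false ->
  exists F, [/\ blockfam f z F, cup F \subset dom r & (bsf f <= #|F| + n)%N].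

Lemma cval_const N (f : input N -> bool) r x :
  constant f r -> consistent x r -> cval f r = f x.
Proof.
move=> /forallP C cx; rewrite /cval; case: pickP => [y cy|/(_ x)]; last by rewrite cx.
by have := C y => /forallP/(_ x); rewrite cy cx => /eqP.
Qed.

Lemma nonconst N (f : input N -> bool) r :
  ~~ constant f r ->
  (exists2 z, consistent z r & f z = false) /\ (exists2 y, consistent y r & f y = true).
Proof.
move=> /forallPn[y /forallPn[y' H]]; rewrite negb_imply in H.
case/andP: H => /andP[cy cy'] ne.
case e: (f y); move: ne; rewrite e.
- by case e': (f y') => // _; split; [exists y'|exists y].
- by case e': (f y') => // _; split; [exists y|exists y'].
Qed.
Lemma inv_pos N (f : input N -> bool) n r : Inv f n r -> ~~ constant f r -> (0 < n)%N.
Proof.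
move=> I nc; case: (nonconst nc) => [[z cz fz] [y cy fy]].
case: (I z cz fz) => F [bF sub le].
pose D := [set p | z p != y p].
have sD : sens f z D by rewrite /sens /D flip_diff fy fz.
have dD : [disjoint D & cup F].
  apply: disjP => p; rewrite inE => ne /(subsetP sub); rewrite inE.
  case e: (r p) => [b|] // _.
  move/consistentP: cz => /(_ p b e) e1; move/consistentP: cy => /(_ p b e) e2.
  by rewrite e1 e2 eqxx in ne.
have [bF' c'] := addblock bF sD dD.
have := blockfam_le bF'; rewrite c' => h.
by case: n I le => // I le; move: (leq_trans h le); rewrite addn0 ltnn.
Qed.

Lemma setT_cert N (f : input N -> bool) y : is_cert f y setT.
Proof.
apply/forallP=> y'; apply/implyP=> /forallP H.
suff -> : y' = y by [].
by apply/ffunP=> p; have := H p; rewrite in_setT => /eqP.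
Qed.

Lemma mincertP N (f : input N -> bool) y :
  is_cert f y (mincert f y) /\ (#|mincert f y| <= bsf f * bsf f)%N.
Proof.
rewrite /mincert; case: (@arg_minnP _ setT (is_cert f y) (fun S => #|S|) (setT_cert f y)).
move=> S cS minS; split=> //; case: (cert_exists f y) => S0 cS0 le0.
exact: leq_trans (minS S0 cS0) le0.
Qed.

Lemma build_ok N (f : input N -> bool) n : forall r x, consistent x r -> Inv f n r ->
  dt_eval (build f n r) x = f x /\ (dt_cost (build f n r) x <= n * (bsf f * bsf f))%N.
Proof.
elim: n => [|n IH] r x cx I /=.
  case: (boolP (constant f r)) => [C|nC]; first by rewrite (cval_const C cx).
  by have := inv_pos I nC.
case: (boolP (constant f r)) => [C|nC]; first by rewrite (cval_const C cx).
set y := pick1 f r.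
have [cy fy] : consistent y r /\ f y = true.
  case: (nonconst nC) => _ [y1 cy1 fy1]; rewrite /y /pick1.
  case: pickP => [y2 /andP[c2 f2]|/(_ y1)]; last by rewrite cy1 fy1.
  by split=> //; apply/idP.
set S := mincert f y.
have [cS szS] := mincertP f y.
have [-> ->] := qseqE (build f n) (enum S) r x.
set r' := fill r (enum S) x.
have cx' : consistent x r' := fill_consistent (enum S) cx.
have I' : Inv f n r'.
  move=> z cz fz; have czr := consistent_fill cx cz.
  case: (I z czr fz) => F [bF sub le].
  pose B := [set p in S | z p != y p].
  have sB : sens f z B.
    have agr : [forall p in S, flip z B p == y p].
      apply/forallP=> p; apply/implyP=> pS; rewrite flipE inE pS /=.
      by case: (z p); case: (y p).
    move/forallP: cS => /(_ (flip z B)) /implyP /(_ agr) /eqP e.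
    by rewrite /sens fz e fy.
  have dB : [disjoint B & cup F].
    apply: disjP => p; rewrite inE => /andP[_ ne] /(subsetP sub); rewrite inE.
    case e: (r p) => [b|] // _.
    move/consistentP: czr => /(_ p b e) e1; move/consistentP: cy => /(_ p b e) e2.
    by rewrite e1 e2 eqxx in ne.
  have [bF' c'] := addblock bF sB dB.
  exists (B |: F); split=> //; last by rewrite c' addSnnS.
  rewrite cupU1 subUset; apply/andP; split.
    by apply/subsetP=> p; rewrite inE => /andP[pS _]; apply: dom_fill_s; rewrite mem_enum.
  by apply/subsetP=> p /(subsetP sub) pd; apply: dom_fill.
have [IH1 IH2] := IH r' x cx' I'.
split=> //; rewrite -cardE mulSn; exact: leq_add.
Qed.

Definition r0 N : pa N := [ffun _ => None].

Lemma D_le N (f : input N -> bool) :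
  forall x, dt_eval (build f (bsf f) (r0 N)) x = f x /\
            (dt_cost (build f (bsf f) (r0 N)) x <= bsf f * (bsf f * bsf f))%N.
Proof.
move=> x; apply: build_ok.
  by apply/consistentP=> p b; rewrite ffunE.
move=> z _ _; exists set0; split.
- by apply/andP; split; apply/forallP=> B; rewrite in_set0.
- by apply/subsetP=> p /cupP[B]; rewrite in_set0.
- by rewrite cards0.
Qed.
Local Open Scope ring_scope.

Lemma seq_ler_sum (T : Type) (A : seq T) (F G : T -> R) :
  (forall p, List.In p A -> F p <= G p) -> \sum_(p <- A) F p <= \sum_(p <- A) G p.
Proof.
elim: A => [|a A IH] H; first by rewrite !big_nil.
rewrite !big_cons; apply: lerD; first by apply: H; left.
by apply: IH => p Hp; apply: H; right.
Qed.

Lemma seq_eq_sum (T : Type) (A : seq T) (F G : T -> R) :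
  (forall p, List.In p A -> F p = G p) -> \sum_(p <- A) F p = \sum_(p <- A) G p.
Proof.
elim: A => [|a A IH] H; first by rewrite !big_nil.
rewrite !big_cons (H a (or_introl erefl)) IH //; move=> p Hp; apply: H; right; exact: Hp.
Qed.

Lemma seq_psum_eq0 (T : Type) (A : seq T) (G : T -> R) :
  (forall p, List.In p A -> 0 <= G p) -> \sum_(p <- A) G p = 0 ->
  forall p, List.In p A -> G p = 0.
Proof.
elim: A => [|a A IH] H //=; rewrite big_cons => /eqP.
have h0 : 0 <= \sum_(p <- A) G p.
  have := seq_ler_sum (F := fun _ => 0) (G := G) (A := A).
  rewrite big1_eq; apply => p Hp; apply: H; right; exact: Hp.
rewrite paddr_eq0 ?H //=; last by left.
case/andP=> /eqP Ha /eqP HA p [<-//|Hp].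
by apply: IH => // q Hq; apply: H; right.
Qed.

Lemma distr_correct N (f : input N -> bool) P (A : rdtree N) :
  is_distr A -> zero_error f P A ->
  forall p, List.In p A -> 0 < p.1 -> forall x, x \in P -> dt_eval p.2 x = f x.
Proof.
move=> [pos sum1] ze p Hp p0 x xP.
pose G (q : R * dtree N) := q.1 * (1 - ((dt_eval q.2 x == f x) : nat)%:R).
have G0 : forall q, List.In q A -> 0 <= G q.
  move=> q Hq; apply: mulr_ge0; first exact: pos.
  by case: (dt_eval q.2 x == f x); rewrite /= ?subrr ?subr0.
have S0 : \sum_(q <- A) G q = 0.
  rewrite /G; under eq_bigr do rewrite mulrBr mulr1.
  by have := ze x xP; rewrite /prob_out sumrB sum1 => ->; rewrite subrr.
have := seq_psum_eq0 G0 S0 Hp; rewrite /G => /eqP; rewrite mulf_eq0 (gt_eqF p0) /=.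
by case: (dt_eval p.2 x =P f x) => //= _; rewrite subr0 oner_eq0.
Qed.

Lemma exp_cost_lb N (A : rdtree N) z (h : nat) :
  is_distr A -> (forall p, List.In p A -> 0 < p.1 -> (h <= dt_cost p.2 z)%N) ->
  h%:R <= exp_cost A z.
Proof.
move=> [pos sum1] H.
have -> : h%:R = \sum_(p <- A) p.1 * h%:R :> R by rewrite -mulr_suml sum1 mul1r.
apply: seq_ler_sum => p Hp; have := pos p Hp; rewrite le0r => /orP[/eqP->|p0].
  by rewrite !mul0r.
by apply: ler_wpM2l; [exact: ltW|rewrite ler_nat; exact: H].
Qed.

Lemma worst_exp_ge N (P : {set input N}) A z : z \in P -> exp_cost A z <= worst_exp_cost P A.
Proof.
move=> zP; rewrite /worst_exp_cost (bigD1 z) //=.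
by rewrite Order.TotalTheory.le_max lexx.
Qed.

Fixpoint qset N (t : dtree N) (x : input N) : {set 'I_N} :=
  match t with
  | Leaf _ => set0
  | Node i t0 t1 => i |: (if x i then qset t1 x else qset t0 x)
  end.

Lemma qset_card N (t : dtree N) x : (#|qset t x| <= dt_cost t x)%N.
Proof.
elim: t => [b|i t0 IH0 t1 IH1] /=; first by rewrite cards0.
apply: (leq_trans (leq_card_setU _ _)); rewrite cards1 add1n ltnS.
by case: (x i).
Qed.

Lemma qset_agree N (t : dtree N) (x y : input N) :
  (forall p, p \in qset t x -> y p = x p) -> dt_eval t y = dt_eval t x.
Proof.
elim: t => [b|i t0 IH0 t1 IH1] //= H.
rewrite (H i (setU11 _ _)); case e: (x i); [apply: IH1|apply: IH0] => p pq;
  by apply: H; rewrite e in_setU1 pq orbT.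
Qed.
Lemma single_distr N (t : dtree N) : is_distr [:: (1 : R, t)].
Proof.
split; first by move=> p [<-|[]]; rewrite /= ler01.
by rewrite big_cons big_nil addr0.
Qed.

Lemma single_prob N (t : dtree N) x b : dt_eval t x = b -> prob_out [:: (1 : R, t)] x b = 1.
Proof. by move=> e; rewrite /prob_out big_cons big_nil /= e eqxx mul1r addr0. Qed.

Lemma R0_lb N (f : input N -> bool) (P : {set input N}) z (h : nat) :
  z \in P -> (forall t, (forall x, x \in P -> dt_eval t x = f x) -> (h <= dt_cost t z)%N) ->
  h%:R <= R0q f P.
Proof.
move=> zP H; rewrite /R0q; apply: reals.lb_le_inf.
  exists (worst_exp_cost P [:: (1 : R, build f (bsf f) (r0 N))]).
  exists [:: (1 : R, build f (bsf f) (r0 N))]; split=> //; first exact: single_distr.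
  by move=> x _; apply: single_prob; case: (D_le f x).
move=> r; rewrite /classical_sets.mkset => -[A [dA zA ->]]; apply: le_trans (worst_exp_ge _ zP).
apply: exp_cost_lb => // p Hp p0; apply: H; exact: (distr_correct dA zA Hp p0).
Qed.

Lemma cost_le_worst N (P : {set input N}) (A : rdtree N) p x :
  List.In p A -> 0 < p.1 -> x \in P -> (dt_cost p.2 x <= worst_cost P A)%N.
Proof.
move=> Hp p0 xP; rewrite /worst_cost; elim: A Hp => [|a A IH] //= [ea|Hp].
  rewrite big_cons ea p0 leq_max; apply/orP; left.
  exact: (@leq_bigmax_cond _ (fun x => x \in P) (fun x => dt_cost p.2 x) x xP).
rewrite big_cons; case: ifP => _; last exact: IH.
by rewrite leq_max (IH Hp) orbT.
Qed.

Lemma Rq_lb N (f : input N -> bool) (P : {set input N}) z w :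
  z \in P -> w \in P -> f z != f w -> 1 <= Rq f P.
Proof.
move=> zP wP ne; rewrite /Rq; apply: reals.lb_le_inf.
  exists ((worst_cost P [:: (1 : R, build f (bsf f) (r0 N))])%:R).
  exists [:: (1 : R, build f (bsf f) (r0 N))]; split=> //; first exact: single_distr.
  move=> x _; rewrite single_prob; first by lra.
  by case: (D_le f x).
move=> r; rewrite /classical_sets.mkset => -[A [[pos sum1] be ->]].
rewrite ler1n lt0n; apply/negP=> /eqP w0.
have leaf : forall p, List.In p A -> 0 < p.1 -> forall x, x \in P -> dt_cost p.2 x = 0%N.
  by move=> p Hp p0 x xP; apply/eqP; rewrite -leqn0 -w0; exact: cost_le_worst.
have eqp : forall b, prob_out A z b = prob_out A w b.
  move=> b; apply: seq_eq_sum => p Hp.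
  have := pos p Hp; rewrite le0r => /orP[/eqP->|p0]; first by rewrite !mul0r.
  have := leaf p Hp p0 z zP; have := leaf p Hp p0 w wP.
  by case: p Hp p0 => c [b'|i t0 t1].
have sum : forall b, prob_out A z b + prob_out A z (~~ b) = 1.
  move=> b; rewrite /prob_out -big_split /= -[in RHS]sum1; apply: eq_bigr => -[c t] _ /=.
  by rewrite -mulrDr; case: (dt_eval t z); case: b; rewrite /= ?mulr1n ?mulr0n ?add0r ?addr0 mulr1.
have h1 := be z zP; have h2 := be w wP; rewrite -eqp in h2.
have fw : f w = ~~ f z by move: ne; case: (f z); case: (f w).
rewrite fw in h2; have := sum (f z); lra.
Qed.

Lemma Rq_ub N (f : input N -> bool) (P : {set input N}) (A : rdtree N) :
  is_distr A -> bounded_error f P A -> (worst_cost P A <= 1)%N -> Rq f P <= 1.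
Proof.
move=> dA bA wc; rewrite /Rq.
apply: (@le_trans _ _ ((worst_cost P A)%:R)); last by move: wc; rewrite -(ler_nat R) mulr1n.
apply: reals.ge_inf; last by exists A.
exists 0; move=> r; rewrite /classical_sets.mkset => -[A' [_ _ ->]]; exact: ler0n.
Qed.

Lemma sum_ind_card (T : finType) (S : {set T}) (P : pred T) :
  (\sum_(r in S) (P r : nat))%N = #|[set r in S | P r]|.
Proof.
rewrite -sum1_card big_mkcond /= [RHS]big_mkcond /=; apply: eq_bigr => r _.
by rewrite inE; case: (r \in S); case: (P r).
Qed.

Definition qtree N (z : input N) (b : bool) (r : 'I_N) : dtree N :=
  Node r (Leaf (if z r then ~~ b else b)) (Leaf (if z r then b else ~~ b)).

Lemma qtree_eval N (z : input N) b r x :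
  dt_eval (qtree z b r) x = if x r == z r then b else ~~ b.
Proof. by rewrite /=; case: (x r); case: (z r). Qed.

Definition A1 N (z : input N) (b : bool) (S : {set 'I_N}) : rdtree N :=
  [seq ((#|S|%:R)^-1, qtree z b r) | r <- enum S].

Lemma A1_prob N (z : input N) b (S : {set 'I_N}) x c :
  prob_out (A1 z b S) x c =
  (#|S|%:R)^-1 * (#|[set r in S | (if x r == z r then b else ~~ b) == c]|)%:R.
Proof.
rewrite /prob_out big_map big_enum /= -big_distrr /=; congr (_ * _).
rewrite -sum_ind_card natr_sum; apply: eq_bigr => r _ /=.
by case: (x r); case: (z r); case: b; case: c.
Qed.

Lemma A1_in N (z : input N) b (S : {set 'I_N}) p : List.In p (A1 z b S) -> p.1 = (#|S|%:R)^-1.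
Proof.
rewrite /A1; elim: (enum S) => [|r s IH] //= [<-//|]; exact: IH.
Qed.

Lemma A1_distr N (z : input N) b (S : {set 'I_N}) : (0 < #|S|)%N -> is_distr (A1 z b S).
Proof.
move=> S0; split.
  by move=> p /A1_in ->; rewrite invr_ge0 ler0n.
rewrite big_map big_enum /= sumr_const -[_ *+ #|S|]mulr_natr mulVf //.
by rewrite pnatr_eq0 -lt0n.
Qed.

Lemma A1_worst N (z : input N) b (S : {set 'I_N}) (P : {set input N}) : (worst_cost P (A1 z b S) <= 1)%N.
Proof.
rewrite /worst_cost big_map; apply: (big_ind (fun n => n <= 1)%N) => //.
  by move=> m n hm hn; rewrite geq_max hm hn.
move=> r _; apply: (big_ind (fun n => n <= 1)%N) => //.
by move=> m n hm hn; rewrite geq_max hm hn.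
by move=> i _ /=; case: (i r).

Qed.

Lemma promise1 N (f : input N -> bool) (z : input N) (W : {set input N})
    (S : {set 'I_N}) (h : nat) :
  (exists w, w \in W) -> (0 < #|S|)%N ->
  (forall w, w \in W -> f w != f z /\ (2 * #|S| <= 3 * #|[set p in S | w p != z p]|)%N) ->
  (forall Q : {set 'I_N},
      (forall w, w \in W -> exists2 p, p \in Q & w p != z p) -> (h <= #|Q|)%N) ->
  Rq f (z |: W) = 1 /\ h%:R <= R0q f (z |: W).
Proof.
move=> [w0 w0W] S0 HW Hhit; split.
  apply: le_anti; apply/andP; split.
    apply: (@Rq_ub _ _ _ (A1 z (f z) S)); [exact: A1_distr|idtac|exact: A1_worst].
    move=> x; rewrite in_setU1 => /orP[/eqP->|xW]; rewrite A1_prob.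
      have -> : [set r in S | (if z r == z r then f z else ~~ f z) == f z] = S.
        by apply/setP=> r; rewrite inE eqxx eqxx andbT.
      rewrite mulVf ?pnatr_eq0 -?lt0n //; lra.
    have [ne le] := HW x xW.
    have fx : f x = ~~ f z by move: ne; case: (f x); case: (f z).
    have -> : [set r in S | (if x r == z r then f z else ~~ f z) == f x] =
              [set p in S | x p != z p].
      by apply/setP=> r; rewrite !inE fx; case: (x r == z r); case: (f z).
    rewrite ler_pdivlMl ?ltr0n //.
    have : (2 * #|S|)%:R <= (3 * #|[set p in S | x p != z p]|)%:R :> R by rewrite ler_nat.
    rewrite !natrM; lra.
  apply: (@Rq_lb _ _ _ z w0); [exact: setU11|by rewrite setU1r|].
  by rewrite eq_sym; case: (HW w0 w0W).
apply: (@R0_lb _ _ _ z) => [|t Ht]; first exact: setU11.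
apply: leq_trans (qset_card t z); apply: Hhit => w wW.
case: (boolP [exists p, (p \in qset t z) && (w p != z p)]) => [/existsP[p /andP[]]|/existsPn nH].
  by exists p.
exfalso; have e : dt_eval t w = dt_eval t z.
  apply: qset_agree => p pq; have := nH p; rewrite pq /=.
  by move/negbNE/eqP.
move: e; rewrite (Ht w (setU1r _ wW)) (Ht z (setU11 _ _)) => e.
by case: (HW w wW); rewrite e eqxx.
Qed.

Lemma pdisjP N (G : {set {set 'I_N}}) B B' p :
  pdisj G -> B \in G -> B' \in G -> p \in B -> p \in B' -> B = B'.
Proof.
move=> /forallP dG BG B'G pB pB'; apply/eqP; apply/negP => /negP ne.
move: (dG B); rewrite BG /= => /forallP/(_ B'); rewrite B'G ne /= => dj.
by move: (disjointFr dj pB); rewrite pB'.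
Qed.

Lemma pdisjS N (G F : {set {set 'I_N}}) : G \subset F -> pdisj F -> pdisj G.
Proof.
move=> sGF /forallP dF; apply/forallP=> B; apply/implyP=> BG.
move: (dF B); rewrite (subsetP sGF _ BG) /= => /forallP dB.
apply/forallP=> B'; apply/implyP=> B'G.
by move: (dB B'); rewrite (subsetP sGF _ B'G).
Qed.

Lemma promise2 N (f : input N -> bool) (z : input N) (G : {set {set 'I_N}})
    (good : pred {set {set 'I_N}}) (a : nat) :
  (0 < a)%N -> pdisj G -> set0 \notin G ->
  (forall T : {set {set 'I_N}}, good T ->
     [/\ T \subset G, f (flip z (cup T)) != f z & (2 * #|G| <= 3 * #|T|)%N]) ->
  (forall Q : {set {set 'I_N}}, Q \subset G -> (#|Q| < a)%N ->
     exists2 T : {set {set 'I_N}}, good T & [disjoint T & Q]) ->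
  exists P, Rq f P = 1 /\ a%:R <= R0q f P.
Proof.
move=> a0 dG nG Hg Hhit.
have [T0 gT0 _] := Hhit set0 (sub0set G) ltac:(by rewrite cards0).
have [T0G fT0 _] := Hg T0 gT0.
have : T0 != set0.
  apply: contraNneq fT0 => ->; suff -> : cup (set0 : {set {set 'I_N}}) = set0 by rewrite flip0.
  by apply/setP=> p; rewrite in_set0; apply/negbTE/cupP=> -[B]; rewrite in_set0.
case/set0Pn=> B0 B0T0; have B0G := subsetP T0G _ B0T0.
have : B0 != set0 by apply: contraNneq nG => <-.
case/set0Pn=> p0 _.
pose rep (B : {set 'I_N}) := odflt p0 [pick p in B].
have repP : forall B, B \in G -> rep B \in B.
  move=> B BG; rewrite /rep; case: pickP => [p //|H].
  have : B != set0 by apply: contraNneq nG => <-.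
  by case/set0Pn=> p pB; move: (H p); rewrite pB.
have rep_inj : {in G &, injective rep}.
  by move=> B B' BG B'G e; apply: (pdisjP dG BG B'G (repP B BG)); rewrite e repP.
pose S := rep @: G.
have cS : #|S| = #|G| by rewrite card_in_imset.
pose W := [set flip z (cup T) | T in [set T | good T]].
exists (z |: W); apply: (@promise1 _ _ _ _ S).
- by exists (flip z (cup T0)); apply: imset_f; rewrite inE.
- by rewrite cS card_gt0; apply/set0Pn; exists B0.
- move=> w /imsetP[T]; rewrite inE => gT ->.
  have [TG fT cT] := Hg T gT; split=> //.
  rewrite cS; apply: (leq_trans cT); rewrite leq_mul2l /=.
  have <- : #|rep @: T| = #|T|.
    by rewrite card_in_imset // => B B' BT B'T; apply: rep_inj; apply: (subsetP TG).
  apply: subset_leq_card; apply/subsetP=> p /imsetP[B BT ->].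
  have BG := subsetP TG _ BT.
  rewrite inE imset_f //= flipE.
  have -> : rep B \in cup T by apply/cupP; exists B => //; exact: repP.
  by case: (z (rep B)).
- move=> Q' HQ'.
  pose Q := [set B in G | ~~ [disjoint B & Q']].
  have aQ : (a <= #|Q|)%N.
    rewrite leqNgt; apply/negP => lt.
    have [T gT dTQ] := Hhit Q ltac:(by apply/subsetP=> B; rewrite inE => /andP[]) lt.
    have [TG _ _] := Hg T gT.
    have [p pQ' ne] := HQ' (flip z (cup T)) ltac:(by apply: imset_f; rewrite inE).
    move: ne; rewrite flipE; case: (boolP (p \in cup T)) => [/cupP[B BT pB] _|_]; last first.
      by rewrite addbF eqxx.
    have BQ : B \in Q.
      rewrite inE (subsetP TG _ BT) /= -setI_eq0; apply/set0Pn; exists p.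
      by rewrite inE pB pQ'.
    by move: (disjointFr dTQ BT); rewrite BQ.
  apply: (leq_trans aQ).
  pose phi (B : {set 'I_N}) := odflt p0 [pick p in B :&: Q'].
  have phiP : forall B, B \in Q -> phi B \in B :&: Q'.
    move=> B; rewrite inE => /andP[_]; rewrite -setI_eq0 => /set0Pn[p pBQ].
    rewrite /phi; case: pickP => [q //|H]; by move: (H p); rewrite pBQ.
  have -> : #|Q| = #|phi @: Q|.
    rewrite card_in_imset // => B B' BQ B'Q e.
    have BG : B \in G by move: BQ; rewrite inE => /andP[].
    have B'G : B' \in G by move: B'Q; rewrite inE => /andP[].
    have := phiP B BQ; have := phiP B' B'Q; rewrite e !inE => /andP[h1 _] /andP[h2 _].
    exact: pdisjP dG BG B'G h2 h1.
  apply: subset_leq_card; apply/subsetP=> p /imsetP[B BQ ->].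
  by have := phiP B BQ; rewrite inE => /andP[].
Qed.

Lemma a_facts (k : nat) : (0 < k)%N ->
  [/\ (0 < (k + 5) %/ 6)%N, (k <= 6 * ((k + 5) %/ 6))%N, (6 * ((k + 5) %/ 6) <= k + 5)%N
    & ((k + 5) %/ 6 <= k)%N].
Proof. move=> k0; split; lia. Qed.

Lemma arithB (k a g t q q0 : nat) :
  (6 * a <= k + 5)%N -> g.+1 = k -> (q < a)%N -> (q0 < a)%N -> (g - (q + q0) <= t)%N ->
  (2 * g <= 3 * t)%N.
Proof. lia. Qed.

Lemma arithA (k g t : nat) : k = g.+1 -> (2 * g <= 3 * t)%N -> (2 * k <= 3 * t.+1)%N.
Proof. lia. Qed.

Lemma bsf_pos N (f : input N -> bool) : (exists x y, f x != f y) -> (0 < bsf f)%N.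
Proof.
move=> [x [y ne]]; pose D := [set p | x p != y p].
have : blockfam f x [set D].
  apply/andP; split.
    apply/forallP=> B; apply/implyP; rewrite inE => /eqP->.
    by apply/forallP=> B'; apply/implyP; rewrite inE => /eqP->; rewrite eqxx.
  apply/forallP=> B; apply/implyP; rewrite inE => /eqP->.
  by rewrite /sens /D flip_diff eq_sym.
by move/blockfam_le; rewrite cards1.
Qed.

Lemma main_comb N (f : input N -> bool) : (exists x y, f x != f y) ->
  exists P, Rq f P = 1 /\ (((bsf f + 5) %/ 6)%N)%:R <= R0q f P.
Proof.
move=> H; have k0 := bsf_pos H.
have [x bx] : exists x, bsx f x = bsf f.
  case: (@arg_maxnP _ (x0 N) xpredT (bsx f) isT) => x _ mx.
  exists x; apply/eqP; rewrite eqn_leq leq_bigmax /=.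
  by apply/bigmax_leqP => y _; exact: mx.
have bf0 : blockfam f x set0 by apply/andP; split; apply/forallP=> B; rewrite in_set0.
case: (@arg_maxnP _ set0 (blockfam f x) (fun F => #|F|) bf0) => F bF mF.
have cF : #|F| = bsf f.
  rewrite -bx; apply/eqP; rewrite eqn_leq; apply/andP; split.
    exact: (@leq_bigmax_cond _ (blockfam f x) (fun F : {set {set 'I_N}} => #|F|) F bF).
  by apply/bigmax_leqP => G bG; exact: mF.
move: (bF) => /andP[dF /forallP sF].
have nF : set0 \notin F.
  apply/negP=> F0; move: (sF set0); rewrite F0 /= /sens flip0 eqxx; done.
have [a0 ka ak ale] := a_facts k0.
move: a0 ka ak ale; set a := ((bsf f + 5) %/ 6)%N => a0 ka ak ale.
pose goodA (T : {set {set 'I_N}}) :=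
  [&& T \subset F, f (flip x (cup T)) != f x & (2 * #|F| <= 3 * #|T|)%N].
case: (boolP [forall Q : {set {set 'I_N}}, (Q \subset F) ==> (#|Q| < a)%N ==>
                 [exists T, goodA T && [disjoint T & Q]]]) => [HA|].
  apply: (@promise2 _ f x F goodA) => //.
    by move=> T /and3P[].
  move=> Q QF Qa; move/forallP: HA => /(_ Q); rewrite QF Qa /= => /existsP[T /andP[gT dT]].
  by exists T.
case/forallPn=> Q0 H0.
have Q0F : Q0 \subset F by apply: contraNT H0 => /negbTE->.
have Q0a : (#|Q0| < a)%N by apply: contraNT H0; rewrite Q0F /= => /negbTE->.
have nT : forall T, ~~ (goodA T && [disjoint T & Q0]).
  move=> T; apply/negP=> h; move: H0; rewrite Q0F Q0a /=.
  by move/negP; apply; apply/existsP; exists T.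
have : ~~ (F \subset Q0).
  apply/negP=> FQ; move: (subset_leq_card FQ); rewrite cF; move: Q0a ale; lia.
case/subsetPn=> i iF iQ0.
have si : f (flip x i) != f x by move: (sF i); rewrite iF.
pose goodB (T : {set {set 'I_N}}) :=
  [&& T \subset F :\ i, [disjoint T & Q0] & (2 * #|F :\ i| <= 3 * #|T|)%N].
have cFi : #|F| = (#|F :\ i|).+1 by rewrite (cardsD1 i F) iF.
apply: (@promise2 _ f (flip x i) (F :\ i) goodB) => //.
- exact: pdisjS (subD1set F i) dF.
- by rewrite inE negb_and nF orbT.
- move=> T /and3P[TF dT cT]; split=> //.
  have iT : i \notin T by apply/negP=> /(subsetP TF); rewrite !inE eqxx.
  have dj : [disjoint i & cup T].
    apply: disjP=> p pi /cupP[B BT pB].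
    have := subsetP TF _ BT; rewrite !inE => /andP[nBi BF].
    by move: nBi; rewrite (pdisjP dF iF BF pi pB) eqxx.
  rewrite flip_flip_disj // -cupU1.
  have dT' : [disjoint i |: T & Q0].
    apply: disjP => B; rewrite in_setU1 => /orP[/eqP->|BT] BQ0.
      by rewrite BQ0 in iQ0.
    by rewrite (disjointFr dT BT) in BQ0.
  have := nT (i |: T); rewrite dT' andbT /goodA.
  have -> : i |: T \subset F.
    by rewrite subUset sub1set iF (subset_trans TF (subD1set F i)).
  rewrite cardsU1 iT add1n (arithA cFi cT) /= andbT negbK => /eqP->.
  by rewrite eq_sym.
- move=> Q QF Qa; exists ((F :\ i) :\: (Q :|: Q0)); last first.
    apply: disjP=> B; rewrite !inE => /and3P[/norP[nBQ _] _ _ BQ].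
    by rewrite BQ in nBQ.
  rewrite /goodB subsetDl /=; apply/andP; split.
    apply: disjP=> B; rewrite !inE => /and3P[/norP[_ nBQ0] _ _ BQ0].
    by rewrite BQ0 in nBQ0.
  apply: (arithB ak (etrans (esym cFi) cF) Qa Q0a).
  rewrite [#|_ :\: (Q :|: Q0)|]cardsD; apply: leq_sub2l; apply: (leq_trans _ (leq_card_setU Q Q0)).
  exact: subset_leq_card (subsetIr _ _).
Qed.

Lemma R0_ub N (f : input N -> bool) :
  R0q f [set: input N] <= ((bsf f ^ 3)%N)%:R /\ 0 <= R0q f [set: input N].
Proof.
pose A0 := [:: (1 : R, build f (bsf f) (r0 N))].
have dA0 : is_distr A0 := single_distr _.
have zA0 : zero_error f [set: input N] A0.
  by move=> x _; apply: single_prob; case: (D_le f x).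
have ge0 : forall A, is_distr A -> 0 <= worst_exp_cost [set: input N] A.
  move=> A dA; apply: le_trans (worst_exp_ge A (in_setT (x0 N))).
  by have := @exp_cost_lb _ A (x0 N) 0 dA; rewrite mulr0n; apply.
split.
  apply: (@le_trans _ _ (worst_exp_cost [set: input N] A0)).
    apply: reals.ge_inf; last by exists A0.
    by exists 0; move=> r; rewrite /classical_sets.mkset => -[A [dA _ ->]]; exact: ge0.
  rewrite /worst_exp_cost; apply: (big_ind (fun v => v <= ((bsf f ^ 3)%N)%:R)) => //.
    by move=> u v hu hv; rewrite Order.TotalTheory.ge_max hu hv.
  move=> y _; rewrite /exp_cost big_cons big_nil addr0 mul1r ler_nat.
  by case: (D_le f y) => _; rewrite expnS expnS expn1.
apply: reals.lb_le_inf; first by exists (worst_exp_cost [set: input N] A0); exists A0.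
by move=> r; rewrite /classical_sets.mkset => -[A [dA _ ->]]; exact: ge0.
Qed.

From mathcomp Require Import boolp classical_sets reals exp.

Theorem theorem29 (N : nat) (f : input N -> bool) :
  (exists x y : input N, f x != f y) ->
  exists P : {set input N},
    Rq f P = 1 /\ (R0q f [set: input N]) `^ (3^-1) / 6 <= R0q f P.
Proof.
move=> H; have [P [RP R0P]] := main_comb H.
exists P; split => //.
have [ub lb] := R0_ub f.
have [_ k6 _ _] := a_facts (bsf_pos H).
move: R0P ub lb k6; set k := bsf f; set a := ((k + 5) %/ 6)%N => R0P ub lb k6.
apply: le_trans R0P.
have p1 : R0q f [set: input N] `^ (3^-1) <= ((k ^ 3)%N)%:R `^ (3^-1).
  by apply: ge0_ler_powR; rewrite ?nnegrE ?ler0n ?invr_ge0 ?inE.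
have p2 : ((k ^ 3)%N)%:R `^ (3^-1) = k%:R :> R.
  rewrite natrX -powR_mulrn ?ler0n // -powRrM mulfV ?pnatr_eq0 //.
  by rewrite powRr1 ?ler0n.
rewrite p2 in p1.
have : (k%:R <= (6 * a)%N%:R :> R) by rewrite ler_nat.
rewrite natrM => h; lra.
Qed.
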